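(* Let $G$ be a graph and $k\in\mathbb N$. Every principal tangle of order $k$ in $G$ is a robust principal $k$-profile.
   Context: A separation of $G$ is an ordered pair $(A,B)$ of subsets of $V(G)$ with $A\cup B=V(G)$ and no edge between $A\setminus B$ and $B\setminus A$; its order is $|A\cap B|$. $(A,B)\le(C,D)$ means $A\subseteq C$, $D\subseteq B$. A principal tangle of order $k$ is a set $\theta$ of separations of order at most $k-1$ such that: ($\theta$1) for all $(A_1,B_1),(A_2,B_2),(A_3,B_3)\in\theta$, $G\neq G[A_1]\cup G[A_2]\cup G[A_3]$; ($\theta$2) for every set $X$ of fewer than $k$ vertices there is a component $C$ of $G-X$ with $(V(G)\setminus C,C\cup X)\in\theta$; ($\theta$3) for every separation $(A,B)$ of order at most $k-1$, $(A,B)\in\theta$ or $(B,A)\in\theta$. A profile is a set $P$ of separations with (P1) if $(C,D)\le(A,B)\in P$ then $(D,C)\notin P$, and (P2) if $(A,B),(C,D)\in P$ then $(B\cap D,A\cup C)\notin P$. $P$ is principal if for every family $((A_i,B_i))_{i\in I}$ in $P$ with all $A_i\cap B_i$ equal, $\bigcap_i(B_i\setminus A_i)\neq\emptyset$; a $k$-profile if all its separations have order $<k$ and for each separation $(A,B)$ of order $<k$, $(A,B)\in P$ or $(B,A)\in P$; robust if for every $(A,B)\in P$ and every separation $(C,D)$ of finite order, if $(B\cap C,A\cup D)$, $(B\cap D,A\cup C)$ both have order $<|A\cap B|$ then one of them is not in $P$. *)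

(* Defs.v *)
(* Graphs on an arbitrary (possibly infinite) vertex type V,
   given by a symmetric irreflexive adjacency relation E.  Vertex sets are
   predicates V -> Prop. *)
From Stdlib Require Import List Relations.

Section Defs.
Variables (V : Type) (E : V -> V -> Prop).

Definition vset := V -> Prop.

Definition is_sep (A B : vset) : Prop :=
  (forall v, A v \/ B v) /\
  (forall u v, A u -> ~ B u -> B v -> ~ A v -> ~ E u v).

Definition card_lt_nat (X : vset) (n : nat) : Prop :=
  exists l : list V, (forall x, X x <-> In x l) /\ length l < n.

Definition order_lt (A B : vset) (n : nat) : Prop :=
  card_lt_nat (fun x => A x /\ B x) n.

Definition finite_order (A B : vset) : Prop :=
  exists l : list V, forall x, A x /\ B x <-> In x l.

Definition card_lt (S T : vset) : Prop :=
  (exists f : {x | S x} -> {y | T y}, forall a b, f a = f b -> a = b) /\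
  ~ (exists g : {y | T y} -> {x | S x}, forall a b, g a = g b -> a = b).

Definition is_component (X C : vset) : Prop :=
  exists u, ~ X u /\
    forall v, C v <-> clos_refl_trans V (fun a b => E a b /\ ~ X a /\ ~ X b) u v.

Definition sepset := vset -> vset -> Prop.

Definition principal_tangle (k : nat) (th : sepset) : Prop :=
  (forall A B, th A B -> is_sep A B /\ order_lt A B k) /\
  (forall A1 B1 A2 B2 A3 B3, th A1 B1 -> th A2 B2 -> th A3 B3 ->
     ~ ((forall v, A1 v \/ A2 v \/ A3 v) /\
        (forall u v, E u v ->
           (A1 u /\ A1 v) \/ (A2 u /\ A2 v) \/ (A3 u /\ A3 v)))) /\
  (forall X : vset, card_lt_nat X k ->
     exists C, is_component X C /\ th (fun v => ~ C v) (fun v => C v \/ X v)) /\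
  (forall A B, is_sep A B -> order_lt A B k -> th A B \/ th B A).

Definition sep_le (C D A B : vset) : Prop :=
  (forall x, C x -> A x) /\ (forall x, B x -> D x).

Definition profile (P : sepset) : Prop :=
  (forall A B, P A B -> is_sep A B) /\
  (forall A B C D, P A B -> sep_le C D A B -> ~ P D C) /\
  (forall A B C D, P A B -> P C D ->
     ~ P (fun x => B x /\ D x) (fun x => A x \/ C x)).

Definition principal (P : sepset) : Prop :=
  forall (I : Type) (As Bs : I -> vset),
    inhabited I ->
    (forall i, P (As i) (Bs i)) ->
    (forall i j x, (As i x /\ Bs i x) <-> (As j x /\ Bs j x)) ->
    exists v, forall i, Bs i v /\ ~ As i v.

Definition k_profile (k : nat) (P : sepset) : Prop :=
  (forall A B, P A B -> order_lt A B k) /\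
  (forall A B, is_sep A B -> order_lt A B k -> P A B \/ P B A).

Definition robust (P : sepset) : Prop :=
  forall A B C D, P A B -> is_sep C D -> finite_order C D ->
    card_lt (fun x => (B x /\ C x) /\ (A x \/ D x)) (fun x => A x /\ B x) ->
    card_lt (fun x => (B x /\ D x) /\ (A x \/ C x)) (fun x => A x /\ B x) ->
    ~ P (fun x => B x /\ C x) (fun x => A x \/ D x) \/
    ~ P (fun x => B x /\ D x) (fun x => A x \/ C x).

End Defs.

(* Main.v *)
Require Import Defs.
From Stdlib Require Import List Relations Classical.

Lemma sep_edge (V : Type) (E : V -> V -> Prop)
  (E_sym : forall u v, E u v -> E v u) (A B : vset V) u v :
  is_sep V E A B -> E u v -> (A u /\ A v) \/ (B u /\ B v).
Proof.
  intros [Hc Hs] He.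
  destruct (classic (A u)), (classic (A v)), (classic (B u)), (classic (B v));
  try tauto;
  first [ exfalso; apply (Hs u v); auto; fail
        | exfalso; apply (Hs v u); auto; fail
        | destruct (Hc u); tauto | destruct (Hc v); tauto ].
Qed.

Theorem proposition6p5 (V : Type) (E : V -> V -> Prop)
  (E_sym : forall u v, E u v -> E v u) (E_irr : forall v, ~ E v v)
  (k : nat) (th : sepset V) :
  principal_tangle V E k th ->
  profile V E th /\ principal V th /\ k_profile V E k th /\ robust V E th.
Proof.
  intros [Hsep [H1 [H2 H3]]].
  assert (Hs : forall A B, th A B -> is_sep V E A B) by (intros; apply Hsep; auto).
  split; [|split; [|split]].
  - split; [exact Hs|split].
    + intros A B C D HAB [HCA HBD] HDC.
      apply (H1 A B D C D C HAB HDC HDC). split.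
      * intro v. destruct (Hs D C HDC) as [Hc _]. destruct (Hc v); auto.
      * intros u v He. destruct (sep_edge V E E_sym D C u v (Hs D C HDC) He); auto.
        left; split; apply HCA; tauto.
    + intros A B C D HAB HCD HX.
      apply (H1 A B C D _ _ HAB HCD HX). split.
      * intro v. destruct (Hs A B HAB) as [Ha _]. destruct (Hs C D HCD) as [Hc _].
        destruct (classic (A v)); auto. destruct (classic (C v)); auto.
        destruct (Ha v), (Hc v); tauto.
      * intros u v He.
        destruct (sep_edge V E E_sym A B u v (Hs A B HAB) He); auto.
        destruct (sep_edge V E E_sym C D u v (Hs C D HCD) He); tauto.
  - intros I As Bs [i0] Hth Hsame.
    set (X := fun x => As i0 x /\ Bs i0 x).
    assert (HX : card_lt_nat V X k) by (apply (Hsep _ _ (Hth i0))).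
    destruct (H2 X HX) as [C [[u0 [Hu0 HC]] HthC]].
    exists u0. intro i.
    assert (HsI := Hs _ _ (Hth i)).
    destruct (classic (As i u0)) as [Ha|Ha].
    2:{ destruct HsI as [Hc _]. destruct (Hc u0); tauto. }
    exfalso.
    assert (Hcl : forall v, C v -> As i v /\ ~ X v).
    { intros v Hv. apply HC in Hv. apply clos_rt_rtn1 in Hv.
      induction Hv as [|y z [He [Hy Hz]] _ IH]; [auto|].
      split; [|exact Hz].
      destruct (sep_edge V E E_sym _ _ y z HsI He) as [[_ ?]|[Hb _]]; auto.
      exfalso. apply Hy. apply (Hsame i i0). tauto. }
    apply (H1 _ _ _ _ _ _ (Hth i) HthC HthC). split.
    + intro v. destruct (classic (C v)); [left; apply Hcl|]; auto.
    + assert (Hreach : forall u v, C u -> E u v -> As i v).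
      { intros u v Hu He. destruct (classic (X v)) as [Hxv|Hxv].
        - apply (Hsame i0 i). exact Hxv.
        - apply Hcl. apply HC. apply rt_trans with u. apply HC; auto.
          apply rt_step. split; auto. split; auto. apply Hcl; auto. }
      intros u v He. destruct (classic (C u)) as [Hu|Hu].
      * left; split; [apply Hcl; auto|eapply Hreach; eauto].
      * destruct (classic (C v)) as [Hv|Hv].
        -- left; split; [eapply Hreach; eauto|apply Hcl; auto].
        -- right; left; auto.
  - split; [intros; apply Hsep; auto|exact H3].
  - intros A B C D HAB HCD _ _ _.
    destruct (classic (th (fun x => B x /\ C x) (fun x => A x \/ D x))) as [T1|T1]; [|auto].
    destruct (classic (th (fun x => B x /\ D x) (fun x => A x \/ C x))) as [T2|T2]; [|auto].
    exfalso. apply (H1 _ _ _ _ _ _ HAB T1 T2). split.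
    + intro v. destruct (Hs A B HAB) as [Ha _]. destruct HCD as [Hc _].
      destruct (Ha v), (Hc v); tauto.
    + intros u v He.
      destruct (sep_edge V E E_sym A B u v (Hs A B HAB) He); auto.
      destruct (sep_edge V E E_sym C D u v HCD He); tauto.
Qed.
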